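(* Let $(C,F)$ be an antler in an undirected multigraph $G$, and let $G':=G-(C\cup F)$ and $S:=C$. Then (i) for every minimum feedback vertex set $S'$ of $G'$, the set $S\cup S'$ is a minimum feedback vertex set of $G$; and (ii) for every integer $z\ge0$ and every $z$-antler $(\hat C,\hat F)$ in $G$, there exists a $z$-antler $(C',F')$ in $G'$ with $C'\cup F'=(\hat C\cup\hat F)\cap V(G')$ and $|C'|=|\hat C|-|(\hat C\cup\hat F)\cap S|$.
   Context: A feedback vertex set (FVS) of $G$ is a set $X\subseteq V(G)$ with $G-X$ acyclic (self-loops and pairs of parallel edges count as cycles); $\mathrm{fvs}(G)$ is its minimum size. For disjoint $X,Y$, $e(X,Y)$ is the number of edges between $X$ and $Y$. A feedback vertex cut (FVC) in $G$ is a pair of disjoint sets $C,F\subseteq V(G)$ such that $G[F]$ is a forest and every tree $T$ of $G[F]$ satisfies $e(V(T),V(G)\setminus(C\cup F))\le1$. An antler is a FVC $(C,F)$ with $|C|\le\mathrm{fvs}(G[C\cup F])$. For $C\subseteq V(G)$, a $C$-certificate is a subgraph $H$ of $G$ such that $C$ is a minimum FVS of $H$; it has order $z$ if every component $H'$ of $H$ satisfies $\mathrm{fvs}(H')=|C\cap V(H')|\le z$. A $z$-antler is an antler $(C,F)$ such that $G[C\cup F]$ contains a $C$-certificate of order $z$. *)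

(* Defs.v *)
(* Undirected multigraphs on a finite vertex type V,
   given by an edge-multiplicity function m : V -> V -> nat
   (m x y = number of edges between x and y, m x x = number of self-loops).
   A (sub)graph is described by a vertex set W together with m; only edges
   between vertices of W are considered (induced subgraph G[W]). *)
From mathcomp Require Import all_boot.
Set Implicit Arguments. Unset Strict Implicit. Unset Printing Implicit Defensive.

Section Multigraph.
Variable V : finType.
Implicit Types (m : V -> V -> nat) (W X Y : {set V}).

Definition has_cycle m X : Prop :=
  (exists2 x, x \in X & 0 < m x x) \/
  (exists x y, [/\ x \in X, y \in X, x != y & 2 <= m x y]) \/
  (exists s : seq V, [/\ 3 <= size s, uniq s, all (fun x => x \in X) s &
                        cycle (fun x y => 0 < m x y) s]).

Definition acyclic m X : Prop := ~ has_cycle m X.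

Definition is_fvs m W X : Prop := X \subset W /\ acyclic m (W :\: X).

Definition is_min_fvs m W X : Prop :=
  is_fvs m W X /\ forall Y, is_fvs m W Y -> #|X| <= #|Y|.

Definition fvs_eq m W (k : nat) : Prop :=
  (exists X, is_fvs m W X /\ #|X| = k) /\ forall X, is_fvs m W X -> k <= #|X|.

Definition e_between m X Y : nat := \sum_(x in X) \sum_(y in Y) m x y.

Definition adjW m W : rel V := fun x y => [&& x \in W, y \in W & 0 < m x y].
Definition comp m W x : {set V} := [set y | connect (adjW m W) x y].

Definition fvc m W (C F : {set V}) : Prop :=
  [/\ C \subset W, F \subset W, [disjoint C & F], acyclic m F &
      forall x, x \in F -> e_between m (comp m F x) (W :\: (C :|: F)) <= 1].

Definition antler m W (C F : {set V}) : Prop :=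
  fvc m W C F /\ forall X, is_fvs m (C :|: F) X -> #|C| <= #|X|.

Definition subgraph mH (VH : {set V}) m W : Prop :=
  [/\ VH \subset W, forall x y, mH x y = mH y x,
      forall x y, mH x y <= m x y &
      forall x y, 0 < mH x y -> x \in VH /\ y \in VH].

Definition certificate mH (VH : {set V}) (C : {set V}) : Prop :=
  C \subset VH /\ is_min_fvs mH VH C.

Definition cert_order mH (VH : {set V}) (C : {set V}) (z : nat) : Prop :=
  forall x, x \in VH ->
    fvs_eq mH (comp mH VH x) #|C :&: comp mH VH x| /\ #|C :&: comp mH VH x| <= z.

Definition z_antler m W (z : nat) (C F : {set V}) : Prop :=
  antler m W C F /\
  exists (mH : V -> V -> nat) (VH : {set V}),
    [/\ subgraph mH VH m (C :|: F), certificate mH VH C & cert_order mH VH C z].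

End Multigraph.

(* Main.v *)
Require Import Defs.
From mathcomp Require Import all_boot zify.
Set Implicit Arguments. Unset Strict Implicit. Unset Printing Implicit Defensive.

Notation compW := Defs.comp.
Ltac sset := apply/subsetP; intros ?w; rewrite !inE;
  repeat match goal with |- context [?z \in ?A] => case: (z \in A) end; done.

Section L.
Variable V : finType.
Implicit Types (m : V -> V -> nat) (A B W X Y : {set V}).

Lemma cyc_mono (m1 m2 : V -> V -> nat) A B : A \subset B ->
  (forall x y, x \in A -> y \in A -> m1 x y <= m2 x y) ->
  has_cycle m1 A -> has_cycle m2 B.
Proof.
move=> /subsetP sAB hle [[x xA lp]|[[x [y [xA yA nxy my]]]|[s [ss us aS cs]]]].
- left; exists x; first exact: sAB. exact: leq_trans lp (hle _ _ xA xA).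
- right; left; exists x, y; split => //; try exact: sAB.
  exact: leq_trans my (hle _ _ xA yA).
- right; right; exists s; split => //.
  + apply/allP => z zs; apply: sAB; exact: (allP aS).
  + apply: (cycle_from_next us) => z zs.
    have h := next_cycle cs zs; apply: leq_trans h _; apply: hle;
      [exact: (allP aS)| apply: (allP aS); by rewrite mem_next].
Qed.

Lemma comp_in m W x y : x \in W -> y \in compW m W x -> y \in W.
Proof.
move=> xW; rewrite /compW /Defs.comp inE => /connectP [p pp ->].
elim: p x xW pp => //= z p IH x xW /andP [/and3P [_ zW _] pp]; exact: IH zW pp.
Qed.

Lemma sum_sub A B (f : V -> nat) : A \subset B ->
  \sum_(x in A) f x <= \sum_(x in B) f x.
Proof.
move=> /subsetP h; apply: sub_le_big; [exact: leqnn | move=> *; exact: leq_addr | exact: h].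
Qed.

Lemma sum1 A (f : V -> nat) a : a \in A -> f a <= \sum_(x in A) f x.
Proof. by move=> aA; rewrite (bigD1 a) //= leq_addr. Qed.

Lemma sum2 A (f : V -> nat) a a' : a \in A -> a' \in A -> a != a' ->
  f a + f a' <= \sum_(x in A) f x.
Proof.
move=> aA aA' ne; rewrite (bigD1 a) //= (bigD1 a') /=; last by rewrite aA' eq_sym ne.
by rewrite addnA leq_addr.
Qed.

Lemma ebet_mono m A A' B B' : A \subset A' -> B \subset B' ->
  e_between m A B <= e_between m A' B'.
Proof.
move=> sA sB; rewrite /e_between.
apply: (@leq_trans (\sum_(x in A) \sum_(y in B') m x y)).
  by apply: leq_sum => x _; apply: sum_sub.
exact: sum_sub.
Qed.

Lemma ebet1 m A B a b : a \in A -> b \in B -> m a b <= e_between m A B.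
Proof.
move=> aA bB; apply: leq_trans (sum1 (fun x => \sum_(y in B) m x y) aA).
exact: sum1.
Qed.

Lemma ebet2 m A B a a' b b' : a \in A -> a' \in A -> b \in B -> b' \in B ->
  (a != a') || (b != b') -> 0 < m a b -> 0 < m a' b' -> 2 <= e_between m A B.
Proof.
move=> aA aA' bB bB' ne p1 p2; rewrite /e_between.
case: (eqVneq a a') ne => [e /= ne| ne _]; first subst a'.
  apply: leq_trans (sum1 (fun x => \sum_(y in B) m x y) aA) => /=.
  have := sum2 (m a) bB bB' ne; lia.
have := sum2 (fun x => \sum_(y in B) m x y) aA aA' ne => /=.
have := sum1 (m a) bB; have := sum1 (m a') bB'; lia.
Qed.

Lemma cyc_all (P : pred V) (s : seq V) x :
  cycle (fun a b => P a ==> P b) s -> x \in s -> P x -> all P s.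
Proof.
move=> cs xs Px; case: (rot_to xs) => i s' e.
rewrite -(rot_cycle i) e /= rcons_path in cs; case/andP: cs => cs _.
suff: all P (x :: s').
  by move=> /allP H; apply/allP => z zs; apply: H; rewrite -e mem_rot.
rewrite /= Px /=.
elim: s' {e xs} x Px cs => //= z s' IH x Px /andP [h p]; have Pz := implyP h Px.
by rewrite Pz; exact: IH Pz p.
Qed.

Lemma cross (s : seq V) (P : pred V) x y : uniq s -> x \in s -> P x ->
  y \in s -> ~~ P y -> exists2 a, a \in s & P a && ~~ P (next s a).
Proof.
move=> us xs Px ys nPy.
case: (boolP (has (fun a => P a && ~~ P (next s a)) s)) => [/hasP [a aS h]|/hasPn H];
  first by exists a.
have cs : cycle (fun a b => P a ==> P b) s.
  apply: (cycle_from_next us) => a aS; have := H a aS.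
  by case: (P a); case: (P (next s a)).
by have := allP (cyc_all cs xs Px) y ys; rewrite (negbTE nPy).
Qed.

Lemma next2 (s : seq V) b : uniq s -> 3 <= size s -> b \in s -> next s (next s b) != b.
Proof.
move=> us ss bs; case: (rot_to bs) => i s' e.
rewrite -!(next_rot i us) e.
have us' : uniq (b :: s') by rewrite -e rot_uniq.
have ss' : 3 <= size (b :: s') by rewrite -e size_rot.
case: s' us' ss' {e} => [|c [|d r]] //= /and3P [] ; rewrite !inE !negb_or => /and3P [bc bd br] /andP [cd cr] ur _.
rewrite eqxx; have cb : (c == b) = false by rewrite eq_sym (negbTE bc).
by rewrite cb eqxx eq_sym.
Qed.


Lemma KL m (m' : V -> V -> nat) C F (msym : forall x y, m x y = m y x)
  (hle : forall x y, m' x y <= m x y) (hf : fvc m [set: V] C F) A :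
  (forall x, x \in A -> x \notin C) -> has_cycle m' A -> has_cycle m' (A :\: F).
Proof.
case: hf => _ _ _ acF hE hAC.
have noF : forall B, B \subset F -> has_cycle m' B -> False.
  by move=> B sB h; apply: acF; apply: cyc_mono sB _ h => *; exact: hle.
have outside : forall x t o, x \in F -> t \in compW m F x -> o \notin C ->
    o \notin compW m F x -> 0 < m t o -> o \in [set: V] :\: (C :|: F).
  move=> x t o xF tT oC oT pto; have tF := comp_in xF tT; rewrite !inE (negbTE oC) /= andbT.
  apply/negP => oF; move/negP: oT; apply; move: tT; rewrite /compW /Defs.comp !inE => tT.
  apply: connect_trans tT (connect1 _); rewrite /adjW oF pto andbT.
  by rewrite tF.
have e1 : forall x t o, x \in F -> t \in compW m F x ->
    o \in [set: V] :\: (C :|: F) -> m t o <= 1.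
  by move=> x t o xF tT oO; apply: leq_trans (hE x xF); exact: ebet1.
have xcomp : forall x, x \in compW m F x by move=> x; rewrite /compW /Defs.comp inE connect0.
move=> [[x xA lp]|[[x [y [xA yA nxy my]]]|[s [ss us aS cs]]]].
- case xF: (x \in F); first by exfalso; apply: (noF F (subxx _)); left; exists x.
  by left; exists x => //; rewrite !inE xF xA.
- have mxy : 2 <= m x y by apply: leq_trans my (hle _ _).
  case xF: (x \in F); case yF: (y \in F).
  + by exfalso; apply: (noF F (subxx _)); right; left; exists x, y.
  + have yO : y \in [set: V] :\: (C :|: F) by rewrite !inE (negbTE (hAC _ yA)) yF.
    by have := leq_trans mxy (e1 x x y xF (xcomp x) yO).
  + have xO : x \in [set: V] :\: (C :|: F) by rewrite !inE (negbTE (hAC _ xA)) xF.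
    by rewrite msym in mxy; have := leq_trans mxy (e1 y y x yF (xcomp y) xO).
  + by right; left; exists x, y; rewrite !inE xF yF xA yA.
- case: (boolP (has (mem F) s)) => [/hasP [x xs xF]|/hasPn nF]; last first.
    right; right; exists s; split => //; apply/allP => z zs.
    by rewrite !inE (negbTE (nF z zs : z \notin F)) (allP aS z zs).
  set T := compW m F x.
  case: (boolP (all (mem T) s)) => [aT|/allPn [y ys yT]].
    exfalso; apply: (noF F (subxx _)); right; right; exists s; split => //.
    by apply/allP => z zs; apply: (comp_in xF); exact: (allP aT z zs).
  have [a aS0 /andP [aT naT]] := cross (P := mem T) us xs (xcomp x) ys yT.
  have nxT : ~~ predC (mem T) x by rewrite /= negbK xcomp.
  have [b bS /andP [bT nbT]] := cross (P := predC (mem T)) us ys yT xs nxT.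
  rewrite /= negbK in nbT.
  have pa : 0 < m a (next s a) by apply: leq_trans (next_cycle cs aS0) (hle _ _).
  have pb : 0 < m (next s b) b by rewrite msym; apply: leq_trans (next_cycle cs bS) (hle _ _).
  have nas : next s a \in s by rewrite mem_next.
  have naO := outside x a _ xF aT (hAC _ (allP aS _ nas)) naT pa.
  have bO := outside x _ b xF nbT (hAC _ (allP aS _ bS)) bT pb.
  case: (boolP ((a != next s b) || (next s a != b))) => [ne|].
    by have := leq_trans (ebet2 aT nbT naO bO ne pa pb) (hE x xF).
  rewrite negb_or !negbK => /andP [/eqP ea /eqP eb].
  by have := next2 us ss bS; rewrite -ea eb eqxx.
Qed.

Lemma CC (m' : V -> V -> nat) A : has_cycle m' A ->
  exists2 v, v \in A & has_cycle m' (A :&: compW m' A v).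
Proof.
have xcomp : forall x, x \in compW m' A x by move=> x; rewrite /compW /Defs.comp inE connect0.
move=> [[x xA lp]|[[x [y [xA yA nxy my]]]|[s [ss us aS cs]]]].
- by exists x => //; left; exists x => //; rewrite in_setI xA xcomp.
- exists x => //; right; left; exists x, y; rewrite !in_setI xA yA xcomp; split => //.
  by rewrite /compW /Defs.comp inE; apply: connect1; rewrite /adjW xA yA; apply: leq_trans my.
- case: s ss us aS cs => [//|x t] ss us aS cs.
  have xA : x \in A by exact: (allP aS x (mem_head _ _)).
  exists x => //; right; right; exists (x :: t); split => //.
  have ca : cycle (adjW m' A) (x :: t).
    apply: (cycle_from_next us) => z zs; rewrite /adjW (allP aS z zs).
    have nzs : next (x :: t) z \in x :: t by rewrite mem_next.
    by rewrite (allP aS _ nzs) (next_cycle cs zs).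
  have pa : path (adjW m' A) x t by move: ca; rewrite /= rcons_path => /andP [].
  apply/allP => z zs; rewrite inE (allP aS z zs) /compW /Defs.comp inE.
  exact: path_connect pa z zs.
Qed.

End L.
Ltac bcase := repeat match goal with |- context [?z \in ?A] => case: (z \in A) end; done.

Lemma cardU_le (V : finType) (A B : {set V}) : #|A :|: B| <= #|A| + #|B|.
Proof. by rewrite cardsU leq_subr. Qed.

Lemma cyc_sub (V : finType) (m : V -> V -> nat) (A B : {set V}) :
  A \subset B -> has_cycle m A -> has_cycle m B.
Proof. by move=> sAB; apply: cyc_mono sAB _ => *; exact: leqnn. Qed.

Theorem lemma20 (V : finType) (m : V -> V -> nat)
  (msym : forall x y, m x y = m y x) (C F : {set V})
  (hA : antler m [set: V] C F) :
  (forall S' : {set V}, is_min_fvs m (~: (C :|: F)) S' ->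
     is_min_fvs m [set: V] (C :|: S')) /\
  (forall (z : nat) (Ch Fh : {set V}), z_antler m [set: V] z Ch Fh ->
     exists C' F' : {set V},
       [/\ z_antler m (~: (C :|: F)) z C' F',
           C' :|: F' = (Ch :|: Fh) :&: ~: (C :|: F) &
           #|C'| + #|(Ch :|: Fh) :&: C| = #|Ch| ]).
Proof.
case: hA => hfC hantC.
have hle0 : forall x y, m x y <= m x y by move=> *; exact: leqnn.
have acF : acyclic m F by case: hfC.
split.
- move=> S' [[sS' acS'] minS'].
  split.
    split; first exact: subsetT.
    move=> hc.
    have := KL msym hle0 hfC (A := [set: V] :\: (C :|: S')) _ hc.
    have hAC : forall x, x \in [set: V] :\: (C :|: S') -> x \notin C.
      by move=> x; rewrite !inE; case: (x \in C).
    move=> /(_ hAC) hc2; apply: acS'; apply: cyc_sub hc2.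
    sset.
  move=> X [_ acX].
  have h1 : #|C| <= #|X :&: (C :|: F)|.
    apply: hantC; split; first exact: subsetIr.
    move=> hc; apply: acX; apply: cyc_sub hc.
    sset.
  have h2 : #|S'| <= #|X :&: ~: (C :|: F)|.
    apply: minS'; split; first exact: subsetIr.
    move=> hc; apply: acX; apply: cyc_sub hc.
    sset.
  have h3 := cardsID (C :|: F) X; rewrite setDE in h3.
  have h4 := cardU_le C S'.
  lia.
- move=> z Ch Fh [[hfh hanth] [mH [VH [hsub [hChVH hminH] hord]]]].
  have acFh : acyclic m Fh by case: hfh.
  have hcnt : #|Ch :&: (C :|: F)| = #|(Ch :|: Fh) :&: C|.
    have le1 : #|Ch| <= #|(Ch :&: ~: (C :|: F)) :|: (C :&: (Ch :|: Fh))|.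
      apply: hanth; split; first by sset.
      move=> hc.
      have hAC : forall x, x \in (Ch :|: Fh) :\: ((Ch :&: ~: (C :|: F)) :|: (C :&: (Ch :|: Fh))) -> x \notin C.
        by move=> x; rewrite !inE; bcase.
      have := KL msym hle0 hfC hAC hc => hc2.
      apply: acFh; apply: cyc_sub hc2; sset.
    have le2 : #|C| <= #|(C :\: (Ch :|: Fh)) :|: (Ch :&: (C :|: F))|.
      apply: hantC; split; first by sset.
      move=> hc.
      have hAC : forall x, x \in (C :|: F) :\: ((C :\: (Ch :|: Fh)) :|: (Ch :&: (C :|: F))) -> x \notin Ch.
        by move=> x; rewrite !inE; bcase.
      have := KL msym hle0 hfh hAC hc => hc2.
      apply: acF; apply: cyc_sub hc2; sset.
    have := cardU_le (Ch :&: ~: (C :|: F)) (C :&: (Ch :|: Fh)).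
    have := cardU_le (C :\: (Ch :|: Fh)) (Ch :&: (C :|: F)).
    have := cardsID (C :|: F) Ch; have := cardsID (Ch :|: Fh) C; rewrite !setDE (setIC (Ch :|: Fh) C).
    rewrite setDE in le2; lia.
  have hcnt2 : #|Ch :&: ~: (C :|: F)| + #|(Ch :|: Fh) :&: C| = #|Ch|.
    by rewrite -hcnt addnC -setDE cardsID.
  case: hfh => _ _ dChFh _ hEh.
  case: hsub => sVH symH leH inH.
  case: hminH => [[_ acH] minH].
  pose VH' := VH :&: ~: (C :|: F).
  pose mH' := fun x y => if (x \in VH') && (y \in VH') then mH x y else 0.
  pose C' := Ch :&: ~: (C :|: F).
  pose F' := Fh :&: ~: (C :|: F).
  have leH' : forall x y, mH' x y <= mH x y.
    by move=> x y; rewrite /mH'; case: ifP.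
  have symH' : forall x y, mH' x y = mH' y x.
    by move=> x y; rewrite /mH' andbC symH.
  have acC' : acyclic mH' (VH' :\: C').
    move=> hc; apply: acH; apply: cyc_mono hc; first by rewrite /VH' /C'; sset.
    by move=> x y _ _; exact: leH'.
  have minC' : forall Z, is_fvs mH' VH' Z -> #|C'| <= #|Z|.
    move=> Z [sZ acZ].
    have hmH : forall x y, mH x y <= m x y by move=> x y; exact: leH.
    have le1 : #|Ch| <= #|(Z :&: VH') :|: (C :&: VH)|.
      apply: minH; split.
        by apply/subsetP => w; rewrite !inE => /orP [/and3P [_ -> _]|/andP [_ ->]].
      move=> hc.
      have hAC : forall x, x \in VH :\: ((Z :&: VH') :|: (C :&: VH)) -> x \notin C.
        by move=> x; rewrite /VH' !inE; bcase.
      have hc2 := KL msym hmH hfC hAC hc.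
      apply: acZ; apply: cyc_mono hc2; first by rewrite /VH'; sset.
      move=> x y xA yA.
      have xV : x \in VH' by move: xA; rewrite /VH' !inE; bcase.
      have yV : y \in VH' by move: yA; rewrite /VH' !inE; bcase.
      by rewrite /mH' xV yV.
    have h1 := cardU_le (Z :&: VH') (C :&: VH).
    have h2 : #|Z :&: VH'| <= #|Z| by apply: subset_leq_card; exact: subsetIl.
    have h3 : #|C :&: VH| <= #|(Ch :|: Fh) :&: C|.
      by apply: subset_leq_card; rewrite (setIC (Ch :|: Fh)); apply: setIS.
    rewrite /C'; lia.
  exists C', F'; split.
  - split.
    + split.
      * split.
        -- exact: subsetIr.
        -- exact: subsetIr.
        -- by rewrite /C' /F' -setI_eq0 setIACA setIid; rewrite -setI_eq0 in dChFh; rewrite (eqP dChFh) set0I.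
        -- by move=> hc; apply: acFh; apply: cyc_sub hc; rewrite /F'; sset.
        -- move=> x xF'.
           have xFh : x \in Fh by move: xF'; rewrite /F' inE => /andP [].
           apply: leq_trans (hEh x xFh); apply: ebet_mono.
             apply/subsetP => y; rewrite /compW /Defs.comp !inE.
             apply: connect_sub => a b; rewrite /adjW => /and3P [aF bF pab].
             apply: connect1; rewrite /adjW pab andbT.
             by move: aF bF; rewrite /F' !inE => /andP [-> _] /andP [-> _].
           by rewrite /C' /F'; sset.
      * move=> Z [sZ acZ].
        have le1 : #|Ch| <= #|Z :|: (C :&: (Ch :|: Fh))|.
          apply: hanth; split.
            apply/subsetP => w; rewrite inE => /orP [/(subsetP sZ)|]; rewrite /C' /F' !inE; bcase.
          move=> hc.
          have hAC : forall x, x \in (Ch :|: Fh) :\: (Z :|: (C :&: (Ch :|: Fh))) -> x \notin C.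
            by move=> x; rewrite !inE; bcase.
          have hc2 := KL msym hle0 hfC hAC hc.
          apply: acZ; apply: cyc_sub hc2; rewrite /C' /F'; sset.
        have h := cardU_le Z (C :&: (Ch :|: Fh)); rewrite (setIC C) in h le1; rewrite /C'; lia.
    + exists mH', VH'; split.
      * split.
        -- apply/subsetP => w; rewrite /VH' inE => /andP [wV wY].
           have := subsetP sVH w wV; move: wY; rewrite /C' /F' !inE; bcase.
        -- exact: symH'.
        -- by move=> x y; apply: leq_trans (leH' x y) (leH x y).
        -- move=> x y; rewrite /mH'; case: ifP => [/andP [-> ->] //|_].
           by rewrite ltnn.
      * split; first by rewrite /C' /VH'; apply: setSI.
        split; last exact: minC'.
        by split; [rewrite /C' /VH'; apply: setSI | exact: acC'].
      * move=> x xV'.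
        have xV : x \in VH by move: xV'; rewrite /VH' inE => /andP [].
        have [_ hz] := hord x xV.
        have sKK : compW mH' VH' x \subset compW mH VH x.
          apply/subsetP => y; rewrite /compW /Defs.comp !inE.
          apply: connect_sub => a b; rewrite /adjW => /and3P [aV bV pab].
          apply: connect1; rewrite /adjW.
          move: aV bV; rewrite /VH' !inE => /andP [-> _] /andP [-> _] /=.
          exact: leq_trans pab (leH' a b).
        have sKV : compW mH' VH' x \subset VH'.
          by apply/subsetP => y; apply: comp_in.
        split; last first.
          apply: leq_trans hz; apply: subset_leq_card; apply: setISS => //.
          by rewrite /C'; exact: subsetIl.
        split.
          exists (C' :&: compW mH' VH' x); split => //; split; first exact: subsetIr.
          move=> hc; apply: acC'; apply: cyc_sub hc.
          apply/subsetP => w /setDP [h2 h1]; apply/setDP; split; first exact: (subsetP sKV w h2).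
          by apply/negP => wC; move/negP: h1; apply; apply/setIP.
        move=> Z [sZ acZ].
        have sym' : connect_sym (adjW mH' VH').
          apply: sym_connect_sym => a b; rewrite /adjW symH'.
          by case: (a \in VH'); case: (b \in VH').
        set K := compW mH' VH' x in sKK sKV sZ acZ *.
        have le1 : #|C'| <= #|(C' :\: K) :|: Z|.
          apply: minC'; split.
            apply/subsetP => w; rewrite inE => /orP [|/(subsetP sZ) /(subsetP sKV) //].
            move=> /setDP [wC' _]; move: wC'; rewrite /C' /VH' !inE => /andP [wCh wY].
            by rewrite (subsetP hChVH w wCh) wY.
          move=> hc.
          have [v vA hv] := CC hc.
          set A := VH' :\: ((C' :\: K) :|: Z) in vA hv.
          have sAV : A \subset VH' by rewrite /A; apply: subsetDl.
          have cAV : forall y, y \in compW mH' A v -> connect (adjW mH' VH') v y.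
            move=> y; rewrite /compW /Defs.comp inE; apply: connect_sub => a b.
            rewrite /adjW => /and3P [aA bA pab]; apply: connect1.
            by rewrite /adjW (subsetP sAV a aA) (subsetP sAV b bA).
          case vK: (v \in K).
            apply: acZ; apply: cyc_sub hv; apply/subsetP => w /setIP [wA wc].
            have wK : w \in K.
              move: vK; rewrite /K /compW /Defs.comp inE => vK.
              by rewrite inE; exact: connect_trans vK (cAV w wc).
            apply/setDP; split => //.
            by move: wA; rewrite /A => /setDP [_]; rewrite in_setU negb_or => /andP [_ ->].
          apply: acC'; apply: cyc_sub hv; apply/subsetP => w /setIP [wA wc].
          have wK : w \notin K.
            apply/negP => wK; move/negP: vK; apply.
            move: wK; rewrite /K /compW /Defs.comp !inE => wK.
            apply: connect_trans wK _; rewrite sym'; exact: cAV w wc.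
          apply/setDP; split; first exact: (subsetP sAV w wA).
          apply/negP => wC; move: wA; rewrite /A => /setDP [_].
          by rewrite in_setU negb_or in_setD (negbTE wK) wC.
        have := cardU_le (C' :\: K) Z; have := cardsID K C'; lia.
  - by rewrite setIUl.
  - exact: hcnt2.
Qed.
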